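(* Let $\varphi=\mathrm{vec}(A)$ and $\varphi_0=\mathrm{vec}(A_0)$ with $A,A_0\in\mathbb{R}^{(p-r)\times r}$, $\|A\|_2<1$, $\|A_0\|_2<1$. Then there exists a matrix $R_U(\varphi,\varphi_0)\in\mathbb{R}^{p\times r}$ such that $$\mathrm{vec}\{U(\varphi)-U(\varphi_0)\}=DU(\varphi_0)(\varphi-\varphi_0)+\mathrm{vec}\{R_U(\varphi,\varphi_0)\},\qquad \|R_U(\varphi,\varphi_0)\|_F\le 8\|\varphi-\varphi_0\|_2^2 .$$ Equivalently, in matrix form, $$U(\varphi)-U(\varphi_0)=2(I_p-X_{\varphi_0})^{-1}(X_\varphi-X_{\varphi_0})(I_p-X_{\varphi_0})^{-1}I_{p\times r}+R_U(\varphi,\varphi_0).$$ Moreover $\|U(\varphi)-U(\varphi_0)\|_F\le 2\sqrt2\,\|\varphi-\varphi_0\|_2$ for all such $\varphi,\varphi_0$.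
   Context: Fix integers $1\le r\le p$. For $A\in\mathbb{R}^{(p-r)\times r}$ write $\varphi=\mathrm{vec}(A)\in\mathbb{R}^{(p-r)r}$ (column-stacking vectorization), $X_\varphi=\begin{bmatrix}0_{r\times r}&-A^{T}\\ A&0_{(p-r)\times(p-r)}\end{bmatrix}$ and $I_{p\times r}=\begin{bmatrix}I_r\\0_{(p-r)\times r}\end{bmatrix}$. The Cayley parameterization is $U(\varphi)=(I_p+X_\varphi)(I_p-X_\varphi)^{-1}I_{p\times r}$, considered on the domain $\{\varphi=\mathrm{vec}(A):\|A\|_2<1\}$; it takes values in $\mathbb{O}(p,r)=\{U\in\mathbb{R}^{p\times r}:U^TU=I_r\}$, and explicitly $U(\varphi)=\begin{bmatrix}(I_r-A^TA)(I_r+A^TA)^{-1}\\ 2A(I_r+A^TA)^{-1}\end{bmatrix}$. Its derivative is $DU(\varphi)=2\,[I_{p\times r}^T(I_p-X_\varphi)^{-T}\otimes(I_p-X_\varphi)^{-1}]\,\Gamma$, where $\Gamma=(I_{p^2}-K_{pp})(\Theta_1^T\otimes\Theta_2^T)$, $\Theta_1=I_{p\times r}^T$, $\Theta_2=[0_{(p-r)\times r},I_{p-r}]$ (so that $\Gamma\varphi=\mathrm{vec}(X_\varphi)$), and $K_{pq}$ denotes the commutation matrix, $\mathrm{vec}(M^T)=K_{pq}\mathrm{vec}(M)$ for $M\in\mathbb{R}^{p\times q}$. $\|\cdot\|_2$ is the spectral (Euclidean) norm and $\|\cdot\|_F$ the Frobenius norm. *)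

(* Defs.v *)
From HB Require Import structures.
From mathcomp Require Import all_boot all_order all_algebra.
From mathcomp Require Import mxtens.
From mathcomp Require Import boolp classical_sets reals.
Set Implicit Arguments. Unset Strict Implicit. Unset Printing Implicit Defensive.
Import Order.TTheory GRing.Theory Num.Theory.
Local Open Scope ring_scope.
Local Open Scope classical_set_scope.

Section Defs.
Variable R : realType.

(* Column-stacking vectorization: entry (i,j) of M (m x n) sits at
   position j*m + i of vec M. *)
Definition vec {m n} (M : 'M[R]_(m, n)) : 'cV[R]_(n * m) :=
  \col_k M (mxtens_unindex k).2 (mxtens_unindex k).1.

Definition kron {m n k l} (A : 'M[R]_(m, n)) (B : 'M[R]_(k, l)) :
  'M[R]_(m * k, n * l) := tensmx A B.

(* Commutation matrix K_{pq}: K_{pq} vec M = vec (M^T) for M : p x q. *)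
Definition commmx (p q : nat) : 'M[R]_(p * q, q * p) :=
  \matrix_(a, b) ((((mxtens_unindex a).1 : nat) == (mxtens_unindex b).2)
                 && (((mxtens_unindex a).2 : nat) == (mxtens_unindex b).1))%:R.

Definition frob {m n} (M : 'M[R]_(m, n)) : R :=
  Num.sqrt (\sum_i \sum_j M i j ^+ 2).

Definition specnorm {m n} (A : 'M[R]_(m, n)) : R :=
  sup [set frob (A *m x) | x in [set x : 'cV[R]_n | frob x <= 1]].

(* p = r + q, q = p - r *)
Definition Ipr (r q : nat) : 'M[R]_(r + q, r) := col_mx 1%:M 0.

Definition Xmx {r q} (A : 'M[R]_(q, r)) : 'M[R]_(r + q) :=
  block_mx 0 (- A^T) A 0.

(* Cayley parameterization, as a function of A (phi = vec A) *)
Definition Ucay {r q} (A : 'M[R]_(q, r)) : 'M[R]_(r + q, r) :=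
  (1%:M + Xmx A) *m invmx (1%:M - Xmx A) *m Ipr r q.

Definition Theta1 (r q : nat) : 'M[R]_(r, r + q) := (Ipr r q)^T.
Definition Theta2 (r q : nat) : 'M[R]_(q, r + q) := row_mx 0 1%:M.

Definition Gamma (r q : nat) : 'M[R]_((r + q) * (r + q), r * q) :=
  (1%:M - commmx (r + q) (r + q)) *m kron (Theta1 r q)^T (Theta2 r q)^T.

Definition DU {r q} (A : 'M[R]_(q, r)) : 'M[R]_(r * (r + q), r * q) :=
  2%:R *: (kron ((Ipr r q)^T *m (invmx (1%:M - Xmx A))^T)
                (invmx (1%:M - Xmx A)) *m Gamma r q).

End Defs.

(* Main.v *)
Require Import Defs.
From HB Require Import structures.
From mathcomp Require Import all_boot all_order all_algebra.
From mathcomp Require Import mxtens ring lra.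
From mathcomp Require Import boolp classical_sets reals.
Import Order.TTheory GRing.Theory Num.Theory.
Local Open Scope ring_scope.
Set Implicit Arguments. Unset Strict Implicit. Unset Printing Implicit Defensive.

Section H.
Variable R : realType.

Definition sq {m n} (M : 'M[R]_(m, n)) : R := \sum_i \sum_j M i j ^+ 2.

Lemma sq_ge0 m n (M : 'M[R]_(m, n)) : 0 <= sq M.
Proof. by apply: sumr_ge0 => i _; apply: sumr_ge0 => j _; apply: sqr_ge0. Qed.

Lemma sq_tr m n (M : 'M[R]_(m, n)) : sq M^T = sq M.
Proof. by rewrite /sq exchange_big; apply: eq_bigr => i _; apply: eq_bigr => j _; rewrite mxE. Qed.

Lemma sq_cols m n (M : 'M[R]_(m, n)) : sq M = \sum_j sq (col j M).
Proof.
rewrite /sq exchange_big; apply: eq_bigr => j _; apply: eq_bigr => i _.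
by rewrite big_ord1 mxE.
Qed.

Lemma sq_contr_l m n (P : 'M[R]_m) (B : 'M[R]_(m, n)) :
  (forall v : 'cV[R]_m, sq (P *m v) <= sq v) -> sq (P *m B) <= sq B.
Proof.
move=> H; rewrite (sq_cols (P *m B)) (sq_cols B); apply: ler_sum => j _.
by rewrite !colE -mulmxA.
Qed.

Lemma sq_contr_r m n (C : 'M[R]_n) (B : 'M[R]_(m, n)) :
  (forall v : 'cV[R]_n, sq (C^T *m v) <= sq v) -> sq (B *m C) <= sq B.
Proof.
move=> H; rewrite -sq_tr trmx_mul -(sq_tr B); exact: sq_contr_l.
Qed.

Lemma sq_row_mx m n1 n2 (a : 'M[R]_(m, n1)) (b : 'M[R]_(m, n2)) :
  sq (row_mx a b) = sq a + sq b.
Proof.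
rewrite /sq -big_split /=; apply: eq_bigr => i _.
rewrite sumr_add; congr (_ + _); apply: eq_bigr => j _;
  by rewrite (row_mxEl, row_mxEr).
Qed.

Lemma sq_col_mx m1 m2 n (a : 'M[R]_(m1, n)) (b : 'M[R]_(m2, n)) :
  sq (col_mx a b) = sq a + sq b.
Proof. by rewrite -sq_tr tr_col_mx sq_row_mx !sq_tr. Qed.

Lemma sq_block m1 m2 n1 n2 (a : 'M[R]_(m1, n1)) (b : 'M[R]_(m1, n2))
  (c : 'M[R]_(m2, n1)) (d : 'M[R]_(m2, n2)) :
  sq (block_mx a b c d) = sq a + sq b + sq c + sq d.
Proof. by rewrite /block_mx sq_col_mx !sq_row_mx addrA. Qed.

Lemma sq0 m n : sq (0 : 'M[R]_(m, n)) = 0.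
Proof. by rewrite /sq big1 // => i _; rewrite big1 // => j _; rewrite mxE expr0n. Qed.

Lemma sq_Ipr m r q (B : 'M[R]_(m, r + q)) : sq (B *m Ipr R r q) <= sq B.
Proof.
have -> : B *m Ipr R r q = lsubmx B.
  by rewrite -{1}(hsubmxK B) /Ipr mul_row_col mulmx1 mulmx0 addr0.
by rewrite -{2}(hsubmxK B) sq_row_mx lerDl sq_ge0.
Qed.

Lemma sq_vec_cv n (v : 'cV[R]_n) : sq v = (v^T *m v) 0 0.
Proof.
rewrite /sq !mxE; apply: eq_bigr => i _; by rewrite big_ord1 !mxE expr2.
Qed.


Lemma skew_mx n (X : 'M[R]_n) (w : 'cV[R]_n) : X^T = - X ->
  ((1%:M - X) *m w)^T *m ((1%:M - X) *m w) = w^T *m w + (X *m w)^T *m (X *m w).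
Proof.
move=> hX; rewrite !trmx_mul linearB /= trmx1 hX opprK.
have E : (1%:M + X) *m (1%:M - X) = 1%:M - X *m X.
  by rewrite mulmxDl mul1mx mulmxBr mulmx1 addrA subrK.
rewrite mulmxA -(mulmxA w^T) E mulmxBr mulmx1 mulmxBl.
by rewrite mulmxN mulNmx !mulmxA.
Qed.

Lemma sq_skew n (X : 'M[R]_n) (w : 'cV[R]_n) : X^T = - X ->
  sq ((1%:M - X) *m w) = sq w + sq (X *m w).
Proof. by move=> hX; rewrite !sq_vec_cv skew_mx // mxE. Qed.

Lemma sq_eq0 m n (M : 'M[R]_(m, n)) : sq M = 0 -> M = 0.
Proof.
move=> h; apply/matrixP => i j; rewrite mxE.
have h1 := psumr_eq0P (fun i _ => sumr_ge0 _ (fun j _ => sqr_ge0 (M i j))) h.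
have h2 := psumr_eq0P (fun j _ => sqr_ge0 (M i j)) (h1 i isT).
by apply/eqP; rewrite -sqrf_eq0 h2.
Qed.

Lemma skew_unit n (X : 'M[R]_n) : X^T = - X -> (1%:M - X) \in unitmx.
Proof.
move=> hX; rewrite unitmxE unitfE -det_tr; apply/negP => /det0P [v vn0 hv].
have : (1%:M - X) *m v^T = 0.
  by apply: trmx_inj; rewrite trmx_mul (trmxK v) hv trmx0.
move=> /(congr1 sq); rewrite sq_skew // sq0 => h.
have : sq v^T = 0.
  apply/eqP; rewrite eq_le sq_ge0 andbT -h lerDl sq_ge0 //.
move=> /sq_eq0 /(congr1 trmx); rewrite trmxK linear0 => e.
by rewrite e eqxx in vn0.
Qed.

Lemma skew_inv_contr n (X : 'M[R]_n) (v : 'cV[R]_n) : X^T = - X ->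
  sq (invmx (1%:M - X) *m v) <= sq v.
Proof.
move=> hX; set w := invmx _ *m v.
have -> : v = (1%:M - X) *m w by rewrite /w mulKVmx // skew_unit.
by rewrite sq_skew // lerDl sq_ge0.
Qed.

Lemma Xmx_tr r q (A : 'M[R]_(q, r)) : (Xmx A)^T = - Xmx A.
Proof.
rewrite /Xmx tr_block_mx !linear0 linearN /= trmxK.
by rewrite -[RHS]scaleN1r scale_block_mx !scaleN1r !oppr0 opprK.
Qed.

Lemma Xmx_sub r q (A B : 'M[R]_(q, r)) : Xmx A - Xmx B = Xmx (A - B).
Proof.
rewrite /Xmx -[- block_mx _ _ _ _]scaleN1r scale_block_mx add_block_mx !scaleN1r.
by rewrite subrr; congr block_mx; apply/matrixP => i j; rewrite !mxE; ring.
Qed.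

Lemma sqN m n (M : 'M[R]_(m, n)) : sq (- M) = sq M.
Proof. by apply: eq_bigr => i _; apply: eq_bigr => j _; rewrite mxE sqrrN. Qed.

Lemma sq_Xmx r q (A : 'M[R]_(q, r)) : sq (Xmx A) = 2%:R * sq A.
Proof. by rewrite /Xmx sq_block !sq0 add0r addr0 sqN sq_tr; ring. Qed.

Lemma sum_tens m n (F : 'I_m * 'I_n -> R) :
  \sum_(k < m * n) F (mxtens_unindex k) = \sum_i \sum_j F (i, j).
Proof.
rewrite pair_big /=; symmetry.
rewrite (reindex (@mxtens_unindex m n)) //=.
by exists (@mxtens_index m n) => i _; rewrite (mxtens_indexK, mxtens_unindexK).
Qed.

Lemma sq_vec m n (M : 'M[R]_(m, n)) : sq (vec M) = sq M.
Proof.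
rewrite /sq (eq_bigr (fun k => M (mxtens_unindex k).2 (mxtens_unindex k).1 ^+ 2)).
  by rewrite (sum_tens (fun p => M p.2 p.1 ^+ 2)) exchange_big.
by move=> k _; rewrite big_ord1 mxE.
Qed.

Lemma vecB m n (A B : 'M[R]_(m, n)) : vec (A - B) = vec A - vec B.
Proof. by apply/matrixP => i j; rewrite !mxE. Qed.

Lemma vecZ m n c (A : 'M[R]_(m, n)) : vec (c *: A) = c *: vec A.
Proof. by apply/matrixP => i j; rewrite !mxE. Qed.

Lemma vecD m n (A B : 'M[R]_(m, n)) : vec (A + B) = vec A + vec B.
Proof. by apply/matrixP => i j; rewrite !mxE. Qed.

Lemma kron_vec a b c d (B : 'M[R]_(a, b)) (Y : 'M[R]_(b, c)) (C : 'M[R]_(c, d)) :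
  kron C^T B *m vec Y = vec (B *m Y *m C).
Proof.
apply/matrixP => k z; rewrite !mxE.
rewrite (eq_bigr (fun l => C (mxtens_unindex l).1 (mxtens_unindex k).1 *
   B (mxtens_unindex k).2 (mxtens_unindex l).2 *
   Y (mxtens_unindex l).2 (mxtens_unindex l).1)); last first.
  by move=> l _; rewrite !mxE.
rewrite (sum_tens (fun p => C p.1 (mxtens_unindex k).1 *
   B (mxtens_unindex k).2 p.2 * Y p.2 p.1)) /=.
apply: eq_bigr => x _; rewrite !mxE mulr_suml; apply: eq_bigr => y _.
by ring.
Qed.


Lemma sum_delta2 a b (F : 'I_a -> 'I_b -> R) (i0 : 'I_a) (j0 : 'I_b) :
  \sum_(i < a) \sum_(j < b) (((j0 : nat) == (j : nat)) && ((i0 : nat) == (i : nat)))%:R * F i j = F i0 j0.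
Proof.
rewrite (bigD1 i0) //= [X in _ + X]big1 ?addr0; last first.
  move=> x hx; apply: big1 => y _.
  by rewrite (_ : (i0 : nat) == x = false) ?andbF ?mul0r // val_eqE eq_sym (negbTE hx).
rewrite (bigD1 j0) //= [X in _ + X]big1 ?addr0; last first.
  by move=> y hy; rewrite (_ : (j0 : nat) == y = false) ?mul0r // val_eqE eq_sym (negbTE hy).
by rewrite !eqxx mul1r.
Qed.

Lemma comm_vec p q (N : 'M[R]_(p, q)) : commmx R p q *m vec N = vec N^T.
Proof.
apply/matrixP => k z; rewrite !mxE.
rewrite (eq_bigr (fun l => ((((mxtens_unindex k).1 : nat) == (mxtens_unindex l).2) &&
    (((mxtens_unindex k).2 : nat) == (mxtens_unindex l).1))%:R * N (mxtens_unindex l).2 (mxtens_unindex l).1));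
  last by move=> l _; rewrite !mxE.
rewrite (sum_tens (fun l => ((((mxtens_unindex k).1 : nat) == l.2) &&
   (((mxtens_unindex k).2 : nat) == l.1))%:R * N l.2 l.1)).
exact: (sum_delta2 (fun i j => N j i)).
Qed.

Lemma Gamma_vec r q (D : 'M[R]_(q, r)) : Gamma R r q *m vec D = vec (Xmx D).
Proof.
rewrite /Gamma -mulmxA kron_vec.
have -> : (Theta2 R r q)^T *m D *m Theta1 R r q = block_mx 0 0 D 0.
  rewrite /Theta2 /Theta1 /Ipr tr_row_mx tr_col_mx !trmx1 !linear0.
  by rewrite mul_col_mx mul0mx mul1mx mul_col_row !mul0mx mulmx1 mulmx0.
rewrite mulmxBl mul1mx comm_vec -vecB; congr vec.
rewrite tr_block_mx !linear0 /Xmx -[- block_mx _ _ _ _]scaleN1r scale_block_mx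
  add_block_mx !scaleN1r.
by congr block_mx; apply/matrixP => i j; rewrite !mxE; ring.
Qed.

Lemma sum_quad n (a b : 'I_n -> R) (x y : R) :
  \sum_i (x * a i - y * b i) ^+ 2 =
  x ^+ 2 * (\sum_i a i ^+ 2) - 2%:R * x * y * (\sum_i a i * b i) + y ^+ 2 * (\sum_i b i ^+ 2).
Proof.
rewrite !mulr_sumr -sumrB -big_split /=; apply: eq_bigr => i _; ring.
Qed.

Lemma CS n (a b : 'I_n -> R) :
  (\sum_i a i * b i) ^+ 2 <= (\sum_i a i ^+ 2) * (\sum_i b i ^+ 2).
Proof.
set Sa := \sum_i a i ^+ 2; set Sb := \sum_i b i ^+ 2; set Sab := \sum_i a i * b i.
have Sb0 : 0 <= Sb by apply: sumr_ge0 => i _; apply: sqr_ge0.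
have Sa0 : 0 <= Sa by apply: sumr_ge0 => i _; apply: sqr_ge0.
case: (eqVneq Sb 0) => hb.
  have hb' := psumr_eq0P (fun i _ => sqr_ge0 (b i)) hb.
  have -> : Sab = 0.
    by rewrite /Sab big1 // => i _; have := hb' i isT; move/eqP; rewrite sqrf_eq0 => /eqP ->; rewrite mulr0.
  by rewrite hb expr0n mulr0.
have hbp : 0 < Sb by rewrite lt_def hb Sb0.
have Q := sum_quad a b Sb Sab.
have : 0 <= \sum_i (Sb * a i - Sab * b i) ^+ 2 by apply: sumr_ge0 => i _; apply: sqr_ge0.
rewrite Q -/Sa -/Sb -/Sab => h.
have h2 : 0 <= Sb * (Sa * Sb - Sab ^+ 2).
  suff -> : Sb * (Sa * Sb - Sab ^+ 2) = Sb ^+ 2 * Sa - 2%:R * Sb * Sab * Sab + Sab ^+ 2 * Sb by [].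
  ring.
rewrite pmulr_rge0 // subr_ge0 in h2.
by [].
Qed.

Lemma sq_mul m n p (P : 'M[R]_(m, n)) (Q : 'M[R]_(n, p)) : sq (P *m Q) <= sq P * sq Q.
Proof.
rewrite -(sq_tr Q) /sq mulr_suml.
apply: ler_sum => i _; rewrite mulr_sumr; apply: ler_sum => j _.
rewrite mxE [X in _ <= _ * X](eq_bigr (fun k => Q k j ^+ 2)); last by move=> k _; rewrite mxE.
exact: CS.
Qed.

Lemma skew_inv_tr_contr n (X : 'M[R]_n) (v : 'cV[R]_n) : X^T = - X ->
  sq ((invmx (1%:M - X))^T *m v) <= sq v.
Proof.
move=> hX; rewrite trmx_inv linearB /= trmx1 hX -[X in _ - - X]opprK.
have hX' : (- X)^T = - - X by rewrite linearN /= hX.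
rewrite opprK; exact: skew_inv_contr.
Qed.

Lemma Ucay_eq r q (A : 'M[R]_(q, r)) :
  Ucay A = 2%:R *: (invmx (1%:M - Xmx A) *m Ipr R r q) - Ipr R r q.
Proof.
have hu := skew_unit (Xmx_tr A).
rewrite /Ucay.
have -> : 1%:M + Xmx A = 1%:M + 1%:M - (1%:M - Xmx A).
  by apply/matrixP => i j; rewrite !mxE; ring.
rewrite mulmxBl mulmxV // mulmxDl mul1mx mulmxBl mulmxDl mul1mx scaler_nat mulr2n.
by [].
Qed.

Lemma inv_diff n (X X0 : 'M[R]_n) : (1%:M - X) \in unitmx -> (1%:M - X0) \in unitmx ->
  invmx (1%:M - X) - invmx (1%:M - X0) = invmx (1%:M - X) *m (X - X0) *m invmx (1%:M - X0).
Proof.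
move=> hu hu0.
have -> : X - X0 = (1%:M - X0) - (1%:M - X) by apply/matrixP => i j; rewrite !mxE; ring.
by rewrite mulmxBr mulmxBl mulmxK // mulVmx // mul1mx.
Qed.

Lemma sqZ m n c (M : 'M[R]_(m, n)) : sq (c *: M) = c ^+ 2 * sq M.
Proof.
rewrite /sq mulr_sumr; apply: eq_bigr => i _; rewrite mulr_sumr.
by apply: eq_bigr => j _; rewrite mxE exprMn.
Qed.

Lemma frobE m n (M : 'M[R]_(m, n)) : frob M = Num.sqrt (sq M).
Proof. by []. Qed.
End H.

Unset Implicit Arguments. Set Strict Implicit.

Theorem theorem1 (R : realType) (r q : nat) (hr : (0 < r)%N)
  (A A0 : 'M[R]_(q, r)) (hA : specnorm A < 1) (hA0 : specnorm A0 < 1) :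
  (exists RU : 'M[R]_(r + q, r),
     vec (Ucay A - Ucay A0) = DU A0 *m (vec A - vec A0) + vec RU /\
     Ucay A - Ucay A0 =
       2%:R *: (invmx (1%:M - Xmx A0) *m (Xmx A - Xmx A0)
                *m invmx (1%:M - Xmx A0) *m Ipr R r q) + RU /\
     frob RU <= 8%:R * frob (vec A - vec A0) ^+ 2) /\
  frob (Ucay A - Ucay A0) <= 2%:R * Num.sqrt 2%:R * frob (vec A - vec A0).
Proof.
have hX := Xmx_tr A; have hX0 := Xmx_tr A0.
have hu := skew_unit hX; have hu0 := skew_unit hX0.
have hD := Xmx_sub A A0.
set Ni := invmx (1%:M - Xmx A); set Mi := invmx (1%:M - Xmx A0).
set I := Ipr R r q.
set Del := Xmx A - Xmx A0.
have dU : Ucay A - Ucay A0 = 2%:R *: (Ni *m Del *m Mi *m I).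
  rewrite !Ucay_eq -/Ni -/Mi -/I /Del -(inv_diff hu hu0) -/Ni -/Mi mulmxBl scalerBr.
  by rewrite opprB addrA subrK.
set RU := Ucay A - Ucay A0 - 2%:R *: (Mi *m Del *m Mi *m I).
have eRU : RU = 2%:R *: (Ni *m Del *m Mi *m Del *m Mi *m I).
  rewrite /RU dU -scalerBr; congr (_ *: _).
  have -> : Ni *m Del *m Mi *m I - Mi *m Del *m Mi *m I = (Ni - Mi) *m (Del *m Mi *m I).
    by rewrite mulmxBl !mulmxA.
  by rewrite /Ni /Mi /Del inv_diff // !mulmxA.
have sD : sq Del = 2%:R * sq (A - A0) by rewrite /Del hD sq_Xmx.
have cN : forall m (B : 'M[R]_(r + q, m)), sq (Ni *m B) <= sq B.
  by move=> m B; apply: sq_contr_l => v; apply: skew_inv_contr.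
have cM : forall m (B : 'M[R]_(m, r + q)), sq (B *m Mi) <= sq B.
  by move=> m B; apply: sq_contr_r => v; apply: skew_inv_tr_contr.
have s0 := sq_ge0 (A - A0).
split.
  exists RU; split; [|split].
  - have hDU : DU A0 *m (vec A - vec A0) = vec (2%:R *: (Mi *m Del *m Mi *m I)).
      rewrite /DU -/Mi -scalemxAl -mulmxA -vecB Gamma_vec -hD -/Del -/I.
      by rewrite -trmx_mul kron_vec vecZ !mulmxA.
    by rewrite hDU /RU !vecB [RHS]addrC subrK.
  - by rewrite /RU [RHS]addrC subrK.
  - rewrite !frobE -vecB sq_vec sqr_sqrtr //.
    have h1 : sq RU <= (8%:R * sq (A - A0)) ^+ 2.
      rewrite eRU sqZ.
      have h2 : sq (Ni *m Del *m Mi *m Del *m Mi *m I) <= sq Del * sq Del.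
        apply: le_trans (sq_Ipr _) _.
        apply: le_trans (cM _ _) _.
        rewrite -!mulmxA.
        apply: le_trans (cN _ _) _.
        rewrite !mulmxA.
        apply: le_trans (sq_mul _ _) _.
        by apply: ler_wpM2r; [apply: sq_ge0 | apply: cM].
      apply: le_trans (ler_wpM2l _ h2) _; first by apply: sqr_ge0.
      rewrite sD.
      have -> : (8%:R * sq (A - A0)) ^+ 2 = 4%:R * (2%:R * sq (A - A0) * (2%:R * sq (A - A0))) + 
         48%:R * sq (A - A0) ^+ 2 by ring.
      have -> : (2%:R : R) ^+ 2 = 4%:R by ring.
      by rewrite lerDl mulr_ge0 // sqr_ge0.
    apply: le_trans (ler_wsqrtr h1) _.
    by rewrite sqrtr_sqr ger0_norm // mulr_ge0.
rewrite !frobE -vecB sq_vec dU sqZ.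
have h3 : sq (Ni *m Del *m Mi *m I) <= sq Del.
  apply: le_trans (sq_Ipr _) _; apply: le_trans (cM _ _) _; exact: cN.
have h4 : (2%:R : R) ^+ 2 * sq (Ni *m Del *m Mi *m I) <= 2%:R ^+ 2 * 2%:R * sq (A - A0).
  rewrite -mulrA -sD; apply: ler_wpM2l => //; apply: sqr_ge0.
apply: le_trans (ler_wsqrtr h4) _.
rewrite sqrtrM ?mulr_ge0 ?sqr_ge0 // sqrtrM ?sqr_ge0 // sqrtr_sqr ger0_norm //.
Qed.
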